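(* Let $(q_n)$ be the Fibonacci Quilt sequence. There is a constant $\rho\in(0,1)$, $\rho\approx0.92627$, such that the proportion of integers $m\in[1,q_n)$ for which the greedy decomposition of $m$ is an FQ-legal decomposition converges to $\rho$ as $n\to\infty$.
   Context: Given an increasing sequence of positive integers $(q_i)_{i\ge1}$, an FQ-legal decomposition of an integer $m\ge0$ is an expression $m=q_{\ell_1}+q_{\ell_2}+\cdots+q_{\ell_t}$ ($t\ge0$, the empty sum representing $0$) with distinct indices $\ell_1>\ell_2>\cdots>\ell_t$ such that $|\ell_i-\ell_j|\notin\{1,3,4\}$ for all $i,j$, and $\{1,3\}\not\subset\{\ell_1,\dots,\ell_t\}$. The Fibonacci Quilt sequence is the increasing sequence of positive integers $(q_i)_{i\ge1}$ in which each $q_i$ is the smallest positive integer having no FQ-legal decomposition using only $q_1,\dots,q_{i-1}$. Its first terms are $1,2,3,4,5,7,9,12,16,21,28,37,49,\dots$. The greedy decomposition of a positive integer $m$ is obtained by choosing the largest $q_k\le m$ as a summand and, if $m-q_k>0$, recursively appending the greedy decomposition of $m-q_k$; the greedy algorithm succeeds on $m$ if the resulting decomposition is FQ-legal. *)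

(* Defs.v *)
From Stdlib Require Import Reals Arith List Bool.
Import ListNotations.

Fixpoint strictly_decreasing (l : list nat) : bool :=
  match l with
  | [] => true
  | x :: r =>
      match r with
      | [] => true
      | y :: _ => (y <? x) && strictly_decreasing r
      end
  end.

Definition gap_ok (i j : nat) : bool :=
  let d := (i - j) + (j - i) in
  negb ((d =? 1) || (d =? 3) || (d =? 4)).

Definition FQ_legal (l : list nat) : bool :=
  strictly_decreasing l
  && forallb (fun i => 1 <=? i) l
  && forallb (fun i => forallb (fun j => gap_ok i j) l) l
  && negb (existsb (Nat.eqb 1) l && existsb (Nat.eqb 3) l).

Fixpoint subsets (l : list nat) : list (list nat) :=
  match l with
  | [] => [[]]
  | x :: r => let s := subsets r in map (cons x) s ++ s
  end.

(* qs = [q_1; ...; q_k]; value of a decomposition with index list S *)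
Definition dec_value (qs : list nat) (S : list nat) : nat :=
  list_sum (map (fun i => nth (i - 1) qs 0) S).

Definition has_legal_dec (qs : list nat) (m : nat) : bool :=
  existsb (fun S => FQ_legal S && (dec_value qs S =? m))
          (subsets (rev (seq 1 (length qs)))).

(* smallest positive integer with no FQ-legal decomposition using qs;
   such an integer always exists in [1, sum qs + 1] since every decomposition
   has value at most sum qs. *)
Definition next_term (qs : list nat) : nat :=
  match find (fun m => negb (has_legal_dec qs m)) (seq 1 (S (list_sum qs))) with
  | Some m => m
  | None => 0
  end.

Fixpoint fq_list (n : nat) : list nat :=
  match n with
  | 0 => []
  | S k => let qs := fq_list k in qs ++ [next_term qs]
  end.

(* q i = q_i for i >= 1 (q 0 = 0 is junk, never used) *)
Definition q (i : nat) : nat := nth (i - 1) (fq_list i) 0.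

(* index k of the largest q_k <= m (for m >= 1; since q_k >= k, k <= m) *)
Definition largest_index (m : nat) : nat :=
  last (filter (fun k => q k <=? m) (seq 1 m)) 0.

(* greedy decomposition as list of indices; the fuel m suffices since each
   step decreases m by at least 1 *)
Fixpoint greedy_aux (fuel m : nat) : list nat :=
  match fuel with
  | 0 => []
  | S f =>
      if m =? 0 then []
      else let k := largest_index m in k :: greedy_aux f (m - q k)
  end.

Definition greedy (m : nat) : list nat := greedy_aux m m.

Definition greedy_succeeds (m : nat) : bool := FQ_legal (greedy m).

Definition greedy_count (n : nat) : nat :=
  length (filter greedy_succeeds (seq 1 (q n - 1))).

Definition greedy_proportion (n : nat) : R :=
  (INR (greedy_count n) / INR (q n - 1))%R.

(* Main.v *)
Require Import Defs.
From Stdlib Require Import Reals.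
From Stdlib Require Import Arith Lia List Bool Wf_nat ZArith Lra.
Import ListNotations.

Fixpoint Q (n : nat) : nat :=
  match n with
  | S (S ((S ((S (S _)) as n3)) as n2)) => Q n2 + Q n3
  | _ => n
  end.

Lemma QS : forall m, Q (S (S (S (S (S m))))) = Q (S (S (S m))) + Q (S (S m)).
Proof. reflexivity. Qed.

Lemma QSx : forall x y z, 5 <= x -> y = x - 2 -> z = x - 3 -> Q x = Q y + Q z.
Proof.
  intros x y z Hx -> ->. destruct x as [|[|[|[|[|m]]]]]; try lia.
  rewrite QS. f_equal; f_equal; lia.
Qed.

Lemma Q_small : forall n, n <= 4 -> Q n = n.
Proof. intros n H. destruct n as [|[|[|[|[|m]]]]]; simpl; lia. Qed.

Lemma Q_succ : forall n, Q n < Q (S n).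
Proof.
  intro n. induction n as [n IH] using lt_wf_ind.
  destruct (le_lt_dec n 4) as [H|H].
  - destruct n as [|[|[|[|[|m]]]]]; simpl; lia.
  - rewrite (QSx (S n) (n-1) (n-2)) by lia.
    rewrite (QSx n (n-2) (n-3)) by lia.
    pose proof (IH (n-2) ltac:(lia)). pose proof (IH (n-3) ltac:(lia)).
    replace (S (n-2)) with (n-1) in * by lia.
    replace (S (n-3)) with (n-2) in * by lia. lia.
Qed.

Lemma Q_lt : forall a b, a < b -> Q a < Q b.
Proof.
  intros a b H. induction H.
  - apply Q_succ.
  - pose proof (Q_succ m). lia.
Qed.

Lemma Q_le : forall a b, a <= b -> Q a <= Q b.
Proof. intros a b H. destruct (Nat.eq_dec a b). subst; lia. pose proof (Q_lt a b). lia. Qed.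

Lemma Q_ge_id : forall n, n <= Q n.
Proof. induction n. simpl; lia. pose proof (Q_succ n). lia. Qed.

Lemma Q_pos : forall n, 1 <= n -> 1 <= Q n.
Proof. intros. pose proof (Q_ge_id n). lia. Qed.

Lemma Q_pad : forall m, 2 <= m -> Q (m+3) = Q (m+1) + Q m.
Proof. intros. apply QSx; lia. Qed.

Lemma Q_pad_le : forall m, Q (m+1) + Q m <= Q (m+3).
Proof.
  intros m. destruct (le_lt_dec 2 m). rewrite Q_pad; lia.
  destruct m as [|[|]]; simpl; lia.
Qed.

Lemma Q_five : forall n, 6 <= n -> Q (S n) = Q n + Q (n-4).
Proof.
  intros n H. rewrite (QSx (S n) (n-1) (n-2)) by lia.
  rewrite (QSx n (n-2) (n-3)) by lia.
  rewrite (QSx (n-1) (n-3) (n-4)) by lia. lia.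
Qed.

Lemma Q_double : forall n, 1 <= n -> Q (S n) <= 2 * Q n.
Proof.
  intros n H. destruct (le_lt_dec n 4).
  - destruct n as [|[|[|[|[|m]]]]]; simpl; lia.
  - rewrite (QSx (S n) (n-1) (n-2)) by lia.
    pose proof (Q_le (n-1) n). pose proof (Q_le (n-2) n). lia.
Qed.

Definition gapP (x y : nat) : Prop :=
  let d := x - y + (y - x) in d <> 1 /\ d <> 3 /\ d <> 4.

Lemma gap_ok_spec : forall i j, gap_ok i j = true <-> gapP i j.
Proof.
  intros i j. unfold gap_ok, gapP.
  destruct (Nat.eqb_spec (i - j + (j - i)) 1);
  destruct (Nat.eqb_spec (i - j + (j - i)) 3);
  destruct (Nat.eqb_spec (i - j + (j - i)) 4); simpl; split; intros; try lia; try discriminate; auto.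
Qed.

Lemma gapP_sym : forall x y, gapP x y -> gapP y x.
Proof. unfold gapP; intros; lia. Qed.

Lemma sd_cons : forall r x, strictly_decreasing (x :: r) = true <->
  (forall y, In y r -> y < x) /\ strictly_decreasing r = true.
Proof.
  induction r as [|a r IH]; intros x.
  - simpl. split; intros; [split; [intros y []|reflexivity] | reflexivity].
  - change (strictly_decreasing (x :: a :: r)) with ((a <? x) && strictly_decreasing (a :: r)).
    rewrite andb_true_iff, Nat.ltb_lt, (IH a). split.
    + intros [Hax [Hr Hs]]. split.
      * intros y [<-|Hy]. auto. specialize (Hr y Hy). lia.
      * first [split; auto | apply IH; auto].
    + intros [Hy [Hr Hs]].
      split; [apply Hy; left; auto|]. split; auto.
Qed.

Lemma existsb_eqb : forall k l, existsb (Nat.eqb k) l = true <-> In k l.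
Proof.
  intros k l. rewrite existsb_exists. split.
  - intros [x [Hx E]]. apply Nat.eqb_eq in E. subst; auto.
  - intros H. exists k. split; auto. apply Nat.eqb_refl.
Qed.

Lemma legal_spec : forall l, FQ_legal l = true <->
  strictly_decreasing l = true /\ (forall x, In x l -> 1 <= x) /\
  (forall x y, In x l -> In y l -> gapP x y) /\ ~ (In 1 l /\ In 3 l).
Proof.
  intros l. unfold FQ_legal.
  rewrite !andb_true_iff, negb_true_iff, !forallb_forall.
  split.
  - intros [[[H1 H2] H3] H4]. split; [auto|split; [|split]].
    + intros x Hx. apply Nat.leb_le, H2; auto.
    + intros x y Hx Hy. apply gap_ok_spec. specialize (H3 x Hx). simpl in H3.
      rewrite forallb_forall in H3. apply H3; auto.
    + intros [A B]. apply existsb_eqb in A. apply existsb_eqb in B. rewrite A, B in H4. discriminate.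
  - intros [H1 [H2 [H3 H4]]]. repeat split; auto.
    + intros x Hx. apply Nat.leb_le, H2; auto.
    + intros x Hx. simpl. rewrite forallb_forall. intros y Hy. apply gap_ok_spec; auto.
    + destruct (existsb (Nat.eqb 1) l) eqn:E1; destruct (existsb (Nat.eqb 3) l) eqn:E3; auto.
      exfalso. apply H4. split; apply existsb_eqb; auto.
Qed.

Lemma legal_cons : forall j r, FQ_legal (j :: r) = true <->
  FQ_legal r = true /\ (forall y, In y r -> y < j /\ gapP j y) /\ 1 <= j /\
  ~ (j = 1 /\ In 3 r) /\ ~ (j = 3 /\ In 1 r).
Proof.
  intros j r. rewrite !legal_spec, sd_cons. split.
  - intros [[Hlt Hsd] [H1 [Hg Hn]]].
    refine (conj (conj Hsd (conj _ (conj _ _))) (conj _ (conj _ (conj _ _)))).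
    + intros x Hx. apply H1. right; auto.
    + intros x y Hx Hy. apply Hg; right; auto.
    + intros [A B]. apply Hn. split; right; auto.
    + intros y Hy. split. apply Hlt; auto. apply Hg. left; auto. right; auto.
    + apply H1. left; auto.
    + intros [-> B]. apply Hn. split; [left|right]; auto.
    + intros [-> B]. apply Hn. split; [right|left]; auto.
  - intros [[Hsd [H1 [Hg Hn]]] [Hy [Hj [N1 N3]]]].
    refine (conj (conj _ Hsd) (conj _ (conj _ _))).
    + intros y H. apply Hy; auto.
    + intros x [<-|Hx]; auto.
    + intros x y [<-|Hx] [<-|Hy'].
      * unfold gapP; lia.
      * apply Hy; auto.
      * apply gapP_sym, Hy; auto.
      * apply Hg; auto.
    + intros [[E1|A] [E3|B]]; try lia.
      * apply N1; subst; auto.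
      * apply N3; subst; auto.
      * apply Hn; auto.
Qed.

Lemma legal_nil : FQ_legal [] = true.
Proof. reflexivity. Qed.

Lemma legal_tail : forall j r, FQ_legal (j :: r) = true -> FQ_legal r = true.
Proof. intros j r H. apply legal_cons in H. tauto. Qed.

Lemma legal_push : forall n r, 6 <= n -> FQ_legal r = true ->
  (forall y, In y r -> y + 5 <= n) -> FQ_legal (n :: r) = true.
Proof.
  intros n r Hn Hr Hy. apply legal_cons.
  refine (conj Hr (conj _ (conj _ (conj _ _)))); try lia.
  intros y H. specialize (Hy y H). unfold gapP. lia.
Qed.

Definition sumQ (S : list nat) : nat := list_sum (map Q S).

Lemma sumQ_cons : forall j r, sumQ (j :: r) = Q j + sumQ r.
Proof. reflexivity. Qed.

Lemma UB : forall r j, FQ_legal (j :: r) = true -> sumQ (j :: r) < Q (j + 3).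
Proof.
  induction r as [|h r IH]; intros j HL.
  - unfold sumQ; simpl. pose proof (Q_lt j (j+3) ltac:(lia)). lia.
  - pose proof HL as HL'. apply legal_cons in HL' as [Hr [Hy _]].
    destruct (Hy h (or_introl eq_refl)) as [Hhj Hg]. unfold gapP in Hg.
    specialize (IH h Hr). rewrite sumQ_cons.
    pose proof (Q_le (h+3) (j+1) ltac:(lia)). pose proof (Q_pad_le j). lia.
Qed.

Lemma legal_ge1 : forall S x, FQ_legal S = true -> In x S -> 1 <= x.
Proof. intros S x H Hx. apply legal_spec in H. destruct H as [_ [H _]]. auto. Qed.

Lemma UB_gen : forall S n, FQ_legal S = true -> (forall x, In x S -> x <= n) ->
  sumQ S < Q (n + 3).
Proof.
  intros [|j r] n HL Hb.
  - simpl. unfold sumQ; simpl. pose proof (Q_pos (n+3) ltac:(lia)). lia.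
  - pose proof (UB r j HL). assert (j <= n) by (apply Hb; left; auto).
    pose proof (Q_le (j+3) (n+3) ltac:(lia)). lia.
Qed.

Lemma exists_dec : forall n m, m < Q (S n) ->
  exists S, FQ_legal S = true /\ (forall x, In x S -> x <= n) /\ sumQ S = m.
Proof.
  intro n. induction n as [n IH] using lt_wf_ind. intros m Hm.
  destruct (le_lt_dec m 6) as [Hm6|Hm6].
  - assert (m = 0 \/ m = 1 \/ m = 2 \/ m = 3 \/ m = 4 \/ m = 5 \/ m = 6) as Hc by lia.
    assert (Hn : m <= 5 -> m <= n).
    { intros. destruct (le_lt_dec n 4). destruct n as [|[|[|[|[|]]]]]; simpl in Hm; lia. lia. }
    destruct Hc as [->|[->|[->|[->|[->|[->| ->]]]]]].
    + exists []. split; [reflexivity|]. split; [intros x []|reflexivity].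
    + exists [1]. split; [reflexivity|]. split; [intros x [<-|[]]; lia|reflexivity].
    + exists [2]. split; [reflexivity|]. split; [intros x [<-|[]]; lia|reflexivity].
    + exists [3]. split; [reflexivity|]. split; [intros x [<-|[]]; lia|reflexivity].
    + exists [4]. split; [reflexivity|]. split; [intros x [<-|[]]; lia|reflexivity].
    + exists [5]. split; [reflexivity|]. split; [intros x [<-|[]]; lia|reflexivity].
    + assert (5 <= n). { destruct (le_lt_dec n 4). destruct n as [|[|[|[|[|]]]]]; simpl in Hm; lia. lia. }
      exists [4;2]. split; [reflexivity|]. split; [intros x [<-|[<-|[]]]; lia|reflexivity].
  - assert (Hn : 6 <= n).
    { destruct (le_lt_dec n 5). destruct n as [|[|[|[|[|[|]]]]]]; simpl in Hm; lia. lia. }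
    destruct (le_lt_dec (Q n) m) as [Hge|Hlt].
    + rewrite Q_five in Hm by lia.
      destruct (IH (n-5) ltac:(lia) (m - Q n)) as [L [HL [Hb Hs]]].
      { replace (S (n-5)) with (n-4) by lia. lia. }
      exists (n :: L). split.
      * apply legal_push; auto. intros y Hy. specialize (Hb y Hy). lia.
      * split. intros x [<-|Hx]. lia. specialize (Hb x Hx). lia.
        rewrite sumQ_cons. lia.
    + destruct (IH (n-1) ltac:(lia) m) as [L [HL [Hb Hs]]].
      { replace (S (n-1)) with n by lia. auto. }
      exists L. split; auto. split; auto. intros x Hx. specialize (Hb x Hx). lia.
Qed.

Lemma NR : forall n L, FQ_legal L = true -> (forall x, In x L -> x <= n) ->
  sumQ L <> Q (S n).
Proof.
  intro n. induction n as [n IH] using lt_wf_ind. intros S0 HL Hb Hs.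
  destruct S0 as [|j r].
  { change (sumQ []) with 0 in Hs. pose proof (Q_pos (S n) ltac:(lia)). lia. }
  pose proof HL as HL'. apply legal_cons in HL' as [Hr [Hy [Hj1 [N1 N3]]]].
  assert (Hjn: j <= n) by (apply Hb; left; auto).
  destruct (le_lt_dec (j+3) n) as [Hlo|Hhi].
  { pose proof (UB r j HL). pose proof (Q_le (j+3) n Hlo). pose proof (Q_succ n). lia. }
  rewrite sumQ_cons in Hs.
  destruct r as [|h r'].
  { change (sumQ []) with 0 in Hs. pose proof (Q_lt j (S n) ltac:(lia)). lia. }
  destruct (Hy h (or_introl eq_refl)) as [Hhj Hgap]. unfold gapP in Hgap.
  pose proof (legal_tail _ _ Hr) as Hr'.
  pose proof Hr as Hr2. apply legal_cons in Hr2 as [_ [Hy' [Hh1 _]]].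
  rewrite sumQ_cons in Hs.
  assert (Hcase : h + 2 = j \/ h + 5 <= j) by lia.
  destruct Hcase as [Hc|Hc].
  -
    subst j.
    assert (Hr'b : forall y, In y r' -> y + 5 <= h).
    { intros y Hyr. destruct (Hy' y Hyr) as [A B]. destruct (Hy y (or_intror Hyr)) as [_ C].
      unfold gapP in B, C. lia. }
    assert (Hcn : n = h + 2 \/ n = h + 3 \/ n = h + 4) by lia.
    destruct Hcn as [En|[En|En]]; subst n.
    + destruct (Nat.eq_dec h 1) as [E1|E1].
      { subst h. apply N3. split. reflexivity. left; reflexivity. }
      replace (S (h+2)) with (h+3) in Hs by lia.
      rewrite Q_pad in Hs by lia. pose proof (Q_lt (h+1) (h+2) ltac:(lia)). lia.
    + replace (S (h+3)) with (h+4) in Hs by lia.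
      rewrite (QSx (h+4) (h+2) (h+1)) in Hs by lia.
      pose proof (Q_lt h (h+1) ltac:(lia)).
      destruct r' as [|y r''].
      * change (sumQ []) with 0 in Hs. lia.
      * assert (y + 5 <= h) by (apply Hr'b; left; auto).
        pose proof (legal_ge1 _ y Hr' (or_introl eq_refl)).
        pose proof (Q_five h ltac:(lia)) as E5; replace (S h) with (h+1) in E5 by lia.
        apply (IH (h+3-8) ltac:(lia) (y :: r'') Hr').
        -- intros x Hx. specialize (Hr'b x Hx). lia.
        -- replace (S (h+3-8)) with (h-4) by lia. lia.
    + replace (S (h+4)) with (h+5) in Hs by lia.
      rewrite (QSx (h+5) (h+3) (h+2)) in Hs by lia.
      pose proof (Q_pad_le h). pose proof (Q_pos (h+1) ltac:(lia)).
      destruct r' as [|y r''].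
      * change (sumQ []) with 0 in Hs. lia.
      * assert (y + 5 <= h) by (apply Hr'b; left; auto).
        pose proof (UB r'' y Hr'). pose proof (Q_le (y+3) (h-2) ltac:(lia)).
        pose proof (Q_lt (h-2) (h+1) ltac:(lia)). lia.
  -
    assert (Hrb : forall y, In y (h :: r') -> y + 5 <= j).
    { intros y [<-|Hyr]. lia. destruct (Hy' y Hyr). lia. }
    pose proof (UB r' h Hr). pose proof (Q_le (h+3) (j-2) ltac:(lia)).
    assert (Hcn : n = j \/ n = j + 1 \/ n = j + 2) by lia.
    destruct Hcn as [En|[En|En]]; subst n.
    + rewrite Q_five in Hs by lia.
      apply (IH (j-5) ltac:(lia) (h :: r') Hr).
      * intros x Hx. specialize (Hrb x Hx). lia.
      * rewrite sumQ_cons. replace (S (j-5)) with (j-4) by lia. lia.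
    + replace (S (j+1)) with (j+2) in Hs by lia.
      rewrite (QSx (j+2) j (j-1)) in Hs by lia.
      pose proof (Q_lt (j-2) (j-1) ltac:(lia)). rewrite sumQ_cons in *. lia.
    + replace (S (j+2)) with (j+3) in Hs by lia.
      rewrite Q_pad in Hs by lia.
      pose proof (Q_lt (j-2) (j+1) ltac:(lia)). rewrite sumQ_cons in *. lia.
Qed.

Lemma subsets_incl : forall l S, In S (subsets l) -> forall x, In x S -> In x l.
Proof.
  induction l as [|a l IH]; intros S HS x Hx.
  - simpl in HS. destruct HS as [<-|[]]. destruct Hx.
  - simpl in HS. apply in_app_or in HS. destruct HS as [HS|HS].
    + apply in_map_iff in HS. destruct HS as [S' [<- HS']].
      destruct Hx as [<-|Hx]. left; auto. right; eapply IH; eauto.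
    + right; eapply IH; eauto.
Qed.

Lemma rev_seq_S : forall k, rev (seq 1 (S k)) = S k :: rev (seq 1 k).
Proof. intros k. rewrite seq_S, rev_app_distr. reflexivity. Qed.

Lemma subsets_complete : forall k S, strictly_decreasing S = true ->
  (forall x, In x S -> 1 <= x <= k) -> In S (subsets (rev (seq 1 k))).
Proof.
  induction k as [|k IH]; intros S Hs Hb.
  - destruct S as [|x S]. simpl; auto. specialize (Hb x (or_introl eq_refl)). lia.
  - rewrite rev_seq_S. simpl. apply in_or_app.
    destruct S as [|x S'].
    + right. apply IH; auto. intros x [].
    + apply sd_cons in Hs as [Hlt Hs'].
      destruct (Nat.eq_dec x (S k)) as [->|Hne].
      * left. apply in_map. apply IH; auto. intros y Hy. specialize (Hlt y Hy).
        specialize (Hb y (or_intror Hy)). lia.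
      * right. apply IH. apply sd_cons; auto.
        intros y [E|Hy]. subst y. specialize (Hb x (or_introl eq_refl)). lia.
        pose proof (Hlt y Hy). pose proof (Hb x (or_introl eq_refl)).
        pose proof (Hb y (or_intror Hy)). lia.
Qed.

Lemma nth_QS : forall k i, 1 <= i <= k -> nth (i - 1) (map Q (seq 1 k)) 0 = Q i.
Proof.
  intros k i H. transitivity (nth (i-1) (map Q (seq 1 k)) (Q 0)). reflexivity.
  rewrite (map_nth Q (seq 1 k) 0 (i-1)). rewrite seq_nth by lia. f_equal; lia.
Qed.

Lemma dec_value_eq : forall k S, (forall x, In x S -> 1 <= x <= k) ->
  dec_value (map Q (seq 1 k)) S = sumQ S.
Proof.
  intros k S. induction S as [|a S IH]; intros Hb. reflexivity.
  unfold dec_value in *. simpl. rewrite nth_QS by (apply Hb; left; auto).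
  rewrite IH. reflexivity. intros x Hx; apply Hb; right; auto.
Qed.

Lemma hld_spec : forall k m, has_legal_dec (map Q (seq 1 k)) m = true <->
  exists S, FQ_legal S = true /\ (forall x, In x S -> x <= k) /\ sumQ S = m.
Proof.
  intros k m. unfold has_legal_dec. rewrite length_map, length_seq, existsb_exists.
  split.
  - intros [S [HS E]]. apply andb_true_iff in E. destruct E as [HL E].
    apply Nat.eqb_eq in E.
    assert (Hb : forall x, In x S -> 1 <= x <= k).
    { intros x Hx. pose proof (subsets_incl _ _ HS x Hx) as H.
      apply in_rev in H. apply in_seq in H. lia. }
    exists S. split; auto. split. intros x Hx; apply Hb; auto.
    rewrite <- E. symmetry. apply dec_value_eq; auto.
  - intros [S [HL [Hb Hs]]].
    assert (Hb' : forall x, In x S -> 1 <= x <= k).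
    { intros x Hx. split. eapply legal_ge1; eauto. auto. }
    exists S. split.
    + apply subsets_complete; auto. apply legal_spec in HL. tauto.
    + apply andb_true_iff. split; auto. apply Nat.eqb_eq.
      rewrite dec_value_eq; auto.
Qed.

Lemma find_seq : forall (f : nat -> bool) len a t,
  (forall m, a <= m < t -> f m = false) -> f t = true -> a <= t < a + len ->
  find f (seq a len) = Some t.
Proof.
  induction len as [|len IH]; intros a t Hf Ht Hr. lia.
  simpl. destruct (Nat.eq_dec a t) as [->|Hne].
  - rewrite Ht. reflexivity.
  - rewrite Hf by lia. apply IH; auto. intros m Hm; apply Hf; lia. lia.
Qed.

Lemma sum_QS : forall k, Q (S k) <= S (list_sum (map Q (seq 1 k))).
Proof.
  induction k as [|k IH]. simpl; lia.
  rewrite seq_S, map_app, list_sum_app. cbn [map list_sum fold_right].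
  pose proof (Q_double (S k) ltac:(lia)). replace (1 + k) with (S k) by lia. lia.
Qed.

Lemma next_term_eq : forall k, next_term (map Q (seq 1 k)) = Q (S k).
Proof.
  intros k. unfold next_term.
  rewrite (find_seq _ _ 1 (Q (S k))).
  - reflexivity.
  - intros m Hm. apply negb_false_iff. apply hld_spec. apply exists_dec. lia.
  - apply negb_true_iff. destruct (has_legal_dec (map Q (seq 1 k)) (Q (S k))) eqn:E; auto.
    apply hld_spec in E. destruct E as [S [HL [Hb Hs]]]. exfalso. eapply NR; eauto.
  - pose proof (sum_QS k). pose proof (Q_pos (S k) ltac:(lia)). lia.
Qed.

Lemma fq_list_eq : forall n, fq_list n = map Q (seq 1 n).
Proof.
  induction n as [|n IH]. reflexivity.
  simpl fq_list. rewrite IH, next_term_eq. rewrite seq_S, map_app. reflexivity.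
Qed.

Lemma q_eq : forall i, q i = Q i.
Proof.
  intros [|i]. reflexivity.
  unfold q. rewrite fq_list_eq, nth_QS by lia. reflexivity.
Qed.

Lemma LI_aux : forall m t, 1 <= m -> 1 <= t ->
  let L := last (filter (fun k => Q k <=? m) (seq 1 t)) 0 in
  1 <= L <= t /\ Q L <= m /\ (L = t \/ m < Q (S L)).
Proof.
  intros m t Hm Ht. induction t as [|t IH]. lia.
  destruct t as [|t].
  - destruct m as [|m]. lia. simpl. lia.
  - cbv zeta in *. specialize (IH ltac:(lia)).
    rewrite seq_S, filter_app. replace (1 + S t) with (S (S t)) by lia.
    change (filter (fun k => Q k <=? m) [S (S t)]) with (if Q (S (S t)) <=? m then [S (S t)] else []).
    destruct (Q (S (S t)) <=? m) eqn:E.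
    + rewrite last_last. apply Nat.leb_le in E. lia.
    + rewrite app_nil_r. apply Nat.leb_gt in E.
      destruct IH as [A [B [C|C]]]; split; try lia; split; try lia. right. rewrite C. auto.
Qed.

Lemma LI_spec : forall m, 1 <= m ->
  1 <= largest_index m /\ Q (largest_index m) <= m < Q (S (largest_index m)).
Proof.
  intros m Hm. unfold largest_index.
  rewrite (filter_ext _ (fun k => Q k <=? m)) by (intros; rewrite q_eq; reflexivity).
  destruct (LI_aux m m Hm Hm) as [A [B C]].
  split. lia. split. auto. destruct C as [C|C]; auto.
  rewrite C. pose proof (Q_ge_id (S m)). lia.
Qed.

Lemma LI_unique : forall m k, Q k <= m < Q (S k) -> 1 <= m -> largest_index m = k.
Proof.
  intros m k Hk Hm. destruct (LI_spec m Hm) as [A B].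
  set (L := largest_index m) in *.
  destruct (lt_eq_lt_dec L k) as [[H|H]|H]; auto.
  - pose proof (Q_le (S L) k ltac:(lia)). lia.
  - pose proof (Q_le (S k) L ltac:(lia)). lia.
Qed.

Lemma greedy_fuel : forall f1 f2 m, m <= f1 -> m <= f2 -> greedy_aux f1 m = greedy_aux f2 m.
Proof.
  induction f1 as [|f1 IH]; intros f2 m H1 H2.
  - assert (m = 0) by lia. subst. destruct f2; reflexivity.
  - destruct f2 as [|f2]. assert (m = 0) by lia. subst. reflexivity.
    simpl. destruct (m =? 0) eqn:E. reflexivity.
    apply Nat.eqb_neq in E. destruct (LI_spec m ltac:(lia)) as [A B].
    pose proof (Q_pos (largest_index m) A).
    f_equal. rewrite q_eq. apply IH; lia.
Qed.

Lemma greedy_cons : forall m, 1 <= m ->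
  greedy m = largest_index m :: greedy (m - Q (largest_index m)).
Proof.
  intros m Hm. unfold greedy. destruct m as [|m']. lia.
  simpl greedy_aux at 1. replace (S m' =? 0) with false by reflexivity.
  destruct (LI_spec (S m') Hm) as [A B]. pose proof (Q_pos _ A).
  rewrite q_eq. f_equal. apply greedy_fuel; lia.
Qed.

Lemma greedy_idx : forall f r x, In x (greedy_aux f r) -> 1 <= x /\ Q x <= r.
Proof.
  induction f as [|f IH]; intros r x H. destruct H.
  simpl in H. destruct (r =? 0) eqn:E. destruct H.
  apply Nat.eqb_neq in E. destruct (LI_spec r ltac:(lia)) as [A B].
  destruct H as [<-|H]. lia.
  apply IH in H. lia.
Qed.

Lemma gs_shift : forall k m, 6 <= k -> Q k <= m < Q (S k) ->
  greedy_succeeds m = greedy_succeeds (m - Q k).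
Proof.
  intros k m Hk Hm. unfold greedy_succeeds.
  pose proof (Q_pos k ltac:(lia)).
  rewrite greedy_cons by lia. rewrite (LI_unique m k) by lia.
  rewrite Q_five in Hm by lia.
  assert (Hb : forall y, In y (greedy (m - Q k)) -> y + 5 <= k /\ 1 <= y).
  { intros y Hy. apply greedy_idx in Hy. destruct Hy as [A B].
    destruct (le_lt_dec (y+5) k). lia. pose proof (Q_le (k-4) y ltac:(lia)). lia. }
  destruct (FQ_legal (greedy (m - Q k))) eqn:E.
  - apply legal_push; auto. intros y Hy; apply Hb; auto.
  - destruct (FQ_legal (k :: greedy (m - Q k))) eqn:E2; auto.
    apply legal_tail in E2. congruence.
Qed.

Definition cnt (N : nat) : nat := length (filter greedy_succeeds (seq 0 N)).

Lemma length_filter_map : forall (f : nat -> bool) (g : nat -> nat) (l : list nat),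
  length (filter f (map g l)) = length (filter (fun x => f (g x)) l).
Proof.
  intros f g l. induction l as [|a l IH]. reflexivity.
  simpl. destruct (f (g a)); simpl; auto.
Qed.

Lemma seq_shift_add : forall b a, seq a b = map (Nat.add a) (seq 0 b).
Proof.
  induction b as [|b IH]; intros a. reflexivity.
  rewrite !seq_S, map_app, IH. simpl. reflexivity.
Qed.

Lemma cnt_add : forall a b, cnt (a + b) =
  cnt a + length (filter (fun r => greedy_succeeds (a + r)) (seq 0 b)).
Proof.
  intros a b. unfold cnt. rewrite seq_app, filter_app, length_app. simpl.
  rewrite (seq_shift_add b a), length_filter_map. reflexivity.
Qed.

Lemma cnt_rec : forall k, 6 <= k -> cnt (Q (S k)) = cnt (Q k) + cnt (Q (k-4)).
Proof.
  intros k Hk. rewrite (Q_five k Hk) at 1. rewrite cnt_add. f_equal.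
  unfold cnt. f_equal. apply filter_ext_in. intros r Hr. apply in_seq in Hr.
  rewrite (gs_shift k (Q k + r) Hk). f_equal; lia.
  rewrite Q_five by lia. lia.
Qed.

Lemma cnt_le : forall N, cnt N <= N.
Proof. intros N. unfold cnt. rewrite <- (length_seq N 0) at 2. apply filter_length_le. Qed.

Lemma gs0 : greedy_succeeds 0 = true.
Proof. reflexivity. Qed.

Lemma greedy_count_eq : forall n, 1 <= n -> S (greedy_count n) = cnt (Q n).
Proof.
  intros n Hn. unfold greedy_count, cnt. rewrite q_eq.
  pose proof (Q_pos n Hn). destruct (Q n) as [|N] eqn:E. lia.
  replace (S N - 1)%nat with N by lia. cbn [seq filter]. rewrite gs0. reflexivity.
Qed.

(* computable copy *)
Definition LIQ (m : nat) : nat := last (filter (fun k => Q k <=? m) (seq 1 m)) 0.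
Fixpoint greedyQ_aux (fuel m : nat) : list nat :=
  match fuel with
  | 0 => []
  | S f => if m =? 0 then [] else let k := LIQ m in k :: greedyQ_aux f (m - Q k)
  end.

Lemma LIQ_eq : forall m, largest_index m = LIQ m.
Proof.
  intros m. unfold largest_index, LIQ.
  rewrite (filter_ext _ (fun k => Q k <=? m)) by (intros; rewrite q_eq; reflexivity). reflexivity.
Qed.

Lemma greedyQ_eq : forall f m, greedy_aux f m = greedyQ_aux f m.
Proof.
  induction f as [|f IH]; intros m. reflexivity.
  simpl. rewrite LIQ_eq, q_eq, IH. reflexivity.
Qed.

Lemma cnt_comp : forall N, cnt N = length (filter (fun m => FQ_legal (greedyQ_aux m m)) (seq 0 N)).
Proof.
  intros N. unfold cnt. f_equal. apply filter_ext. intros m.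
  unfold greedy_succeeds, greedy. rewrite greedyQ_eq. reflexivity.
Qed.

Open Scope Z_scope.

Definition Fz (n : nat) : Z := Z.of_nat (Q n) - Z.of_nat (cnt (Q n)).

Fixpoint Hf (n : nat) : Z :=
  match n with
  | S (S (S (S (S (S m))))) => Hf m
  | 0%nat => 2 | 1%nat => 3 | 2%nat => 1 | 3%nat => -2 | 4%nat => -3 | _ => -1
  end.

Lemma Hf_6 : forall n, Hf (n + 6) = Hf n.
Proof. intros n. replace (n + 6)%nat with (S (S (S (S (S (S n)))))) by lia. reflexivity. Qed.

Lemma Hrec : forall t, Hf (t + 5) = Hf (t + 4) + Hf t.
Proof.
  intro t. induction t as [t IH] using lt_wf_ind.
  destruct (le_lt_dec 6 t) as [H|H].
  - replace t with ((t - 6) + 6)%nat by lia.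
    replace ((t - 6 + 6) + 5)%nat with ((t - 6 + 5) + 6)%nat by lia.
    replace ((t - 6 + 6) + 4)%nat with ((t - 6 + 4) + 6)%nat by lia.
    rewrite !Hf_6. apply IH. lia.
  - destruct t as [|[|[|[|[|[|]]]]]]; try reflexivity; lia.
Qed.

Lemma Hbound : forall n, -3 <= Hf n <= 3.
Proof.
  intro n. induction n as [n IH] using lt_wf_ind.
  destruct (le_lt_dec 6 n) as [H|H].
  - replace n with ((n - 6) + 6)%nat by lia. rewrite Hf_6. apply IH. lia.
  - destruct n as [|[|[|[|[|[|]]]]]]; simpl; lia.
Qed.

Lemma Fz_rec : forall k, (6 <= k)%nat -> Fz (S k) = Fz k + Fz (k - 4).
Proof.
  intros k Hk. unfold Fz. rewrite cnt_rec by auto. rewrite Q_five by auto. lia.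
Qed.

Lemma main_identity : forall n, (5 <= n)%nat ->
  7 * Fz n = 6 * Z.of_nat (Q n) - 5 * Z.of_nat (Q (n-1)) - 3 * Z.of_nat (Q (n-2)) + Hf n.
Proof.
  intro n. induction n as [n IH] using lt_wf_ind. intros Hn.
  destruct (le_lt_dec n 10) as [Hs|Hs].
  - unfold Fz. rewrite cnt_comp.
    assert (n = 5 \/ n = 6 \/ n = 7 \/ n = 8 \/ n = 9 \/ n = 10)%nat as Hc by lia.
    destruct Hc as [->|[->|[->|[->|[->| ->]]]]]; vm_compute; reflexivity.
  - destruct n as [|k]. lia.
    rewrite Fz_rec by lia.
    pose proof (IH k ltac:(lia) ltac:(lia)) as I1.
    pose proof (IH (k-4)%nat ltac:(lia) ltac:(lia)) as I2.
    pose proof (Q_five k ltac:(lia)) as E1.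
    pose proof (Q_five (k-1) ltac:(lia)) as E2.
    pose proof (Q_five (k-2) ltac:(lia)) as E3.
    replace (S (k-1)) with k in E2 by lia.
    replace (S (k-2)) with (k-1)%nat in E3 by lia.
    replace (S k - 1)%nat with k by lia.
    replace (S k - 2)%nat with (k-1)%nat by lia.
    replace (k - 4 - 1)%nat with (k-1-4)%nat in I2 by lia.
    replace (k - 4 - 2)%nat with (k-2-4)%nat in I2 by lia.
    pose proof (Hrec (k-4)) as HR.
    replace (k - 4 + 5)%nat with (S k) in HR by lia.
    replace (k - 4 + 4)%nat with k in HR by lia.
    rewrite E1, E2, E3 in *. rewrite HR. lia.
Qed.

Close Scope Z_scope.
Open Scope R_scope.

Lemma cont_cubic : continuity (fun x => x*x*x - x - 1).
Proof. reg. Qed.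

Lemma pex : exists p, 1.324717 <= p <= 1.324718 /\ p*p*p = p + 1.
Proof.
  destruct (IVT (fun x => x*x*x - x - 1) 1.324717 1.324718 cont_cubic) as [z [Hz Ez]]; try lra.
  exists z. split; auto. lra.
Qed.


Definition xr (n : nat) : R := INR (Q n).
Definition er (p : R) (n : nat) : R := xr n - p * xr (n - 1).

Lemma xr_pad : forall n, (3 <= n)%nat -> xr (n + 2) = xr n + xr (n - 1).
Proof.
  intros n Hn. unfold xr. rewrite (QSx (n+2) n (n-1)) by lia. apply plus_INR.
Qed.

Lemma er_rec (p : R) (Hp : 1.324717 <= p <= 1.324718) (Hp3 : p*p*p = p + 1) : forall n, (3 <= n)%nat ->
  er p (n + 2) = - p * er p (n + 1) - (p*p - 1) * er p n.
Proof.
  intros n Hn. unfold er.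
  replace (n + 2 - 1)%nat with (n + 1)%nat by lia.
  replace (n + 1 - 1)%nat with n by lia.
  rewrite xr_pad by lia.
  assert (E: p*p*p - p - 1 = 0) by lra.
  assert (H: xr n + xr (n - 1) - p * xr (n + 1) - (- p * (xr (n + 1) - p * xr n) - (p * p - 1) * (xr n - p * xr (n - 1)))
    = - (p*p*p - p - 1) * xr (n-1)) by ring.
  rewrite E in H. lra.
Qed.

Definition Vr (p : R) (n : nat) : R := er p (n+1) * er p (n+1) + p * er p (n+1) * er p n + (p*p - 1) * er p n * er p n.

Lemma Vr_step (p : R) (Hp : 1.324717 <= p <= 1.324718) (Hp3 : p*p*p = p + 1) : forall n, (3 <= n)%nat -> Vr p (n + 1) = (p*p - 1) * Vr p n.
Proof.
  intros n Hn. unfold Vr. replace (n + 1 + 1)%nat with (n + 2)%nat by lia.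
  rewrite (er_rec p Hp Hp3) by lia. ring.
Qed.

Lemma Vr_lower (p : R) (Hp : 1.324717 <= p <= 1.324718) (Hp3 : p*p*p = p + 1) : forall n, (3 * p * p / 4 - 1) * er p n * er p n <= Vr p n.
Proof.
  intros n. unfold Vr.
  set (a := er p (n+1)). set (b := er p n).
  assert (0 <= (a + p * b / 2) * (a + p * b / 2)) by (apply Rle_0_sqr).
  assert (E: a * a + p * a * b + (p * p - 1) * b * b - (3 * p * p / 4 - 1) * b * b
     = (a + p * b / 2) * (a + p * b / 2)) by field.
  lra.
Qed.

Lemma Vr_nonneg (p : R) (Hp : 1.324717 <= p <= 1.324718) (Hp3 : p*p*p = p + 1) : forall n, 0 <= Vr p n.
Proof.
  intros n. pose proof (Vr_lower p Hp Hp3 n). assert (0 <= er p n * er p n) by nra. nra.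
Qed.

Lemma Vr_le (p : R) (Hp : 1.324717 <= p <= 1.324718) (Hp3 : p*p*p = p + 1) : forall n, (3 <= n)%nat -> Vr p n <= Vr p 3.
Proof.
  intros n Hn. induction n as [|n IH]. lia.
  destruct (Nat.eq_dec n 2) as [->|Hne]. lra.
  replace (S n) with (n + 1)%nat by lia. rewrite (Vr_step p Hp Hp3) by lia.
  specialize (IH ltac:(lia)). pose proof (Vr_nonneg p Hp Hp3 n). nra.
Qed.

Lemma Vr3 (p : R) (Hp : 1.324717 <= p <= 1.324718) (Hp3 : p*p*p = p + 1) : Vr p 3 <= 0.2.
Proof.
  unfold Vr, er, xr. simpl. nra.
Qed.

Lemma er_bound (p : R) (Hp : 1.324717 <= p <= 1.324718) (Hp3 : p*p*p = p + 1) : forall n, (3 <= n)%nat -> -1 <= er p n <= 1.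
Proof.
  intros n Hn. pose proof (Vr_lower p Hp Hp3 n). pose proof (Vr_le p Hp Hp3 n Hn). pose proof (Vr3 p Hp Hp3).
  assert (er p n * er p n <= 1) by nra. nra.
Qed.


Open Scope R_scope.

Lemma identity_R : forall n, (5 <= n)%nat ->
  7 * (INR (Q n) - INR (cnt (Q n))) =
  6 * INR (Q n) - 5 * INR (Q (n-1)) - 3 * INR (Q (n-2)) + IZR (Hf n).
Proof.
  intros n Hn. pose proof (main_identity n Hn) as H. unfold Fz in H.
  apply (f_equal IZR) in H.
  rewrite !plus_IZR, !minus_IZR, !mult_IZR, !minus_IZR in H.
  rewrite !INR_IZR_INZ. exact H.
Qed.

Lemma Hf_R : forall n, -3 <= IZR (Hf n) <= 3.
Proof.
  intros n. destruct (Hbound n) as [A B]. split.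
  - apply IZR_le in A. exact A.
  - apply IZR_le in B. exact B.
Qed.


Definition rr (p : R) : R := / p.
Definition Lr (p : R) : R := (6 - 5 * rr p - 3 * rr p * rr p) / 7.
Definition rho (p : R) : R := 1 - Lr p.

Lemma rr_bounds (p : R) (Hp : 1.324717 <= p <= 1.324718) (Hp3 : p*p*p = p + 1) : 0.754877 <= rr p <= 0.754878.
Proof.
  unfold rr. assert (Hpr : p * / p = 1) by (field; lra).
  assert (0 < / p) by (apply Rinv_0_lt_compat; lra). nra.
Qed.

Lemma rho_bounds (p : R) (Hp : 1.324717 <= p <= 1.324718) (Hp3 : p*p*p = p + 1) : 0.92626 < rho p < 0.92628.
Proof. unfold rho, Lr. pose proof (rr_bounds p Hp Hp3). nra. Qed.

Lemma key_bound (p : R) (Hp : 1.324717 <= p <= 1.324718) (Hp3 : p*p*p = p + 1) : forall n, (5 <= n)%nat ->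
  Rabs (greedy_proportion n - rho p) <= 3 / (INR (Q n) - 1).
Proof.
  intros n Hn.
  set (x := INR (Q n)). set (x1 := INR (Q (n-1))). set (x2 := INR (Q (n-2))).
  set (c := INR (cnt (Q n))). set (h := IZR (Hf n)).
  pose proof (identity_R n Hn) as Id. fold x x1 x2 c h in Id.
  pose proof (Hf_R n) as Hh. fold h in Hh.
  pose proof (er_bound p Hp Hp3 n ltac:(lia)) as Be.
  pose proof (er_bound p Hp Hp3 (n-1) ltac:(lia)) as Be'.
  unfold er in Be, Be'. unfold xr in Be, Be'. replace (n - 1 - 1)%nat with (n-2)%nat in Be' by lia.
  fold x x1 x2 in Be, Be'.
  set (e := x - p * x1) in *. set (e' := x1 - p * x2) in *.
  pose proof (rr_bounds p Hp Hp3) as Br.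
  assert (Hpr : rr p * p = 1) by (unfold rr; field; lra).
  assert (X1 : x1 = rr p * (x - e)).
  { unfold e. replace (x - (x - p*x1)) with (p*x1) by ring. rewrite <- Rmult_assoc, Hpr; ring. }
  assert (X2 : x2 = rr p * (x1 - e')).
  { unfold e'. replace (x1 - (x1 - p*x2)) with (p*x2) by ring. rewrite <- Rmult_assoc, Hpr; ring. }
  assert (Hx : INR n <= x) by (apply le_INR, Q_ge_id).
  assert (Hn5 : 5 <= INR n) by (replace 5 with (INR 5) by (simpl; lra); apply le_INR; lia).
  assert (Hgc : S (greedy_count n) = cnt (Q n)) by (apply greedy_count_eq; lia).
  assert (Hc1 : INR (greedy_count n) = c - 1) by (unfold c; rewrite <- Hgc, S_INR; ring).
  assert (Hq1 : INR (q n - 1) = x - 1).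
  { rewrite q_eq. rewrite minus_INR. reflexivity. apply Q_pos. lia. }
  unfold greedy_proportion. rewrite Hc1, Hq1.
  set (F := x - c) in *.
  assert (E7 : 7 * (F - Lr p * x) = 5 * rr p * e + 3 * rr p * rr p * e + 3 * rr p * e' + h).
  { assert (Hg : 7 * (F - Lr p * x) = 7 * F - (6 - 5 * rr p - 3 * rr p * rr p) * x) by (unfold Lr; field).
    rewrite Hg, Id, X2, X1. ring. }
  assert (B1 : - rr p <= rr p * e <= rr p) by nra.
  assert (B2 : - (rr p*rr p) <= rr p * rr p * e <= rr p * rr p) by nra.
  assert (B3 : - rr p <= rr p * e' <= rr p) by nra.
  assert (BF : -2 <= F - Lr p * x <= 2) by nra.
  assert (BL : 0 < Lr p < 1) by (unfold Lr; nra).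
  assert (Hx1 : 0 < x - 1) by lra.
  replace ((c - 1) / (x - 1) - rho p) with ((Lr p * x - F - Lr p) / (x - 1))
    by (unfold rho, F; field; lra).
  unfold Rdiv. rewrite Rabs_mult. rewrite (Rabs_right (/ (x - 1))).
  2: { apply Rle_ge, Rlt_le, Rinv_0_lt_compat; lra. }
  apply Rmult_le_compat_r. apply Rlt_le, Rinv_0_lt_compat; lra.
  apply Rabs_le. lra.
Qed.

Lemma conv (p : R) (Hp : 1.324717 <= p <= 1.324718) (Hp3 : p*p*p = p + 1) : Un_cv greedy_proportion (rho p).
Proof.
  intros eps Heps.
  destruct (INR_archimed eps (3 + eps) Heps) as [N HN].
  exists (Nat.max N 5). intros n Hn. unfold R_dist.
  assert (Hn5 : (5 <= n)%nat) by lia.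
  pose proof (key_bound p Hp Hp3 n Hn5) as K.
  assert (HNn : INR N <= INR n) by (apply le_INR; lia).
  assert (Hx : INR n <= INR (Q n)) by (apply le_INR, Q_ge_id).
  assert (Hn5' : 5 <= INR n) by (replace 5 with (INR 5) by (simpl; lra); apply le_INR; lia).
  set (x := INR (Q n)) in *.
  assert (Hx1 : 0 < x - 1) by lra.
  assert (Hprod : 3 < (x - 1) * eps) by nra.
  assert (3 / (x - 1) < eps).
  { unfold Rdiv. assert (Hi : 0 < / (x - 1)) by (apply Rinv_0_lt_compat; lra).
    assert (Hii : (x - 1) * / (x - 1) = 1) by (field; lra). nra. }
  lra.
Qed.



Theorem mainTheorem14 :
  exists rho : R,
    0 < rho < 1 /\ 0.92626 < rho < 0.92628 /\
    Un_cv greedy_proportion rho.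
Proof.
  destruct pex as [p [Hp Hp3]].
  exists (rho p). pose proof (rho_bounds p Hp Hp3).
  split. lra. split. exact H. apply conv; assumption.
Qed.
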